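(* Let $\rho:\pi^*\to\mathbf U_n$ be a homomorphism and $\gamma\in\mathbf{SU}_n$, written up to conjugacy as $\gamma=\mathrm{diag}(e^{2\pi i\gamma_1},\dots,e^{2\pi i\gamma_n})$ with $0\le\gamma_j<1$. Then $\gamma$ is conjugate to $\widetilde\Psi(\rho)$ for some reducible $\rho$ if and only if there is a proper nonempty subcollection $\gamma_{\sigma(1)},\dots,\gamma_{\sigma(n_1)}$ ($1\le n_1<n$) with $\sum_{j=1}^{n_1}\gamma_{\sigma(j)}\in\mathbb Z$. Consequently, the set of critical values of $\Psi$ in $W=\mathbf{SU}_n/\mathrm{Ad}$ is a union of hyperplanes.
   Context: $F^*$ is a compact surface of genus $g\ge1$ with one boundary component, $\pi^*=\pi_1F^*$ free on $a_1,b_1,\dots,a_g,b_g$. $\widetilde\Psi:\mathrm{Hom}(\pi^*,\mathbf U_n)\cong\mathbf U_n^{2g}\to\mathbf{SU}_n$ is $\widetilde\Psi(A_1,B_1,\dots,A_g,B_g)=\prod_{i=1}^g[A_i,B_i]$, and $\Psi$ is the induced map on conjugacy classes. A representation $\rho$ is reducible if $\mathbb C^n$ has a proper nonzero $\rho(\pi^* )$-invariant subspace (equivalently, up to conjugacy $\mathrm{im}\rho\subset\mathbf U_{n_1}\times\mathbf U_{n_2}$ with $n_1+n_2=n$, $n_i\ge1$). The critical points of $\widetilde\Psi$ are exactly the reducible representations, and the critical values of $\Psi$ are the images of these. *)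

(* Defs.v *)
From HB Require Import structures.
From mathcomp Require Import all_boot all_order all_algebra.
From mathcomp Require Import all_classical all_reals all_analysis.
From mathcomp Require Import complex.
Set Implicit Arguments. Unset Strict Implicit. Unset Printing Implicit Defensive.
Import Order.TTheory GRing.Theory Num.Theory.
Local Open Scope ring_scope.
Local Open Scope complex_scope.

Definition adjmx (R : rcfType) (m n : nat) (A : 'M[complex R]_(m, n)) : 'M[complex R]_(n, m) :=
  (map_mx Num.conj A)^T.

Definition unitary (R : rcfType) (n : nat) (A : 'M[complex R]_n) : Prop :=
  A *m adjmx A = 1%:M.

Definition commmx (R : rcfType) (n : nat) (A B : 'M[complex R]_n) : 'M[complex R]_n :=
  A *m B *m invmx A *m invmx B.

(* A representation rho : pi^* -> U(n), pi^* free on a_1,b_1,...,a_g,b_g,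
   is given by the images A i = rho(a_(i+1)), B i = rho(b_(i+1)).
   Psi_tilde rho = prod_(i=1..g) [A_i, B_i] (ordered product). *)
Definition Psi_tilde (R : rcfType) (n g : nat) (A B : 'I_g -> 'M[complex R]_n) : 'M[complex R]_n :=
  \big[mulmx/1%:M]_(i < g) commmx (A i) (B i).

Definition is_rep (R : rcfType) (n g : nat) (A B : 'I_g -> 'M[complex R]_n) : Prop :=
  forall i, unitary (A i) /\ unitary (B i).

(* rho is reducible: some proper nonzero subspace V of C^n (row space of a
   matrix, row-vector convention) is invariant under all generators
   (hence under the whole image rho(pi^* )  ). *)
Definition reducible_rep (R : rcfType) (n g : nat) (A B : 'I_g -> 'M[complex R]_n) : Prop :=
  exists V : 'M[complex R]_n,
    (0 < \rank V)%N /\ (\rank V < n)%N /\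
    forall i, stablemx V (A i) /\ stablemx V (B i).

Definition diag_exp (R : realType) (n : nat) (gam : 'I_n -> R) : 'M[complex R]_n :=
  diag_mx (\row_j (cos (2 * pi * gam j) +i* sin (2 * pi * gam j))).

(* Main.v *)
Require Import Defs.
From HB Require Import structures.
From mathcomp Require Import all_boot all_order all_algebra.
From mathcomp Require Import all_classical all_reals all_analysis.
From mathcomp Require Import complex.
From mathcomp Require Import ring lra.
From mathcomp Require Import fingroup perm.
Import Order.TTheory GRing.Theory Num.Theory.
Local Open Scope ring_scope.
Local Open Scope complex_scope.

Set Implicit Arguments. Unset Strict Implicit.
Section T.
Variable R : realType.
Definition ee (x : R) : complex R := cos (2 * pi * x) +i* sin (2 * pi * x).

Lemma conjE (z : complex R) : Num.conj z = conjc z.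
Proof. by []. Qed.

Lemma eeD x y : ee (x + y) = ee x * ee y.
Proof.
rewrite /ee mulrDr cosD sinD.
apply/eqP; rewrite eq_complex /=; apply/andP; split; apply/eqP; ring.
Qed.

Lemma ee0 : ee 0 = 1.
Proof. by rewrite /ee mulr0 cos0 sin0. Qed.

Lemma ee_conj x : ee x * conjc (ee x) = 1.
Proof.
rewrite /ee; apply/eqP; rewrite eq_complex /=; apply/andP; split; apply/eqP.
  by rewrite mulrN opprK -!expr2 cos2Dsin2.
by rewrite mulrN mulrC addNr.
Qed.

Lemma ee_nat (m : nat) : ee m%:R = 1.
Proof.
have h : 2 * pi * m%:R = 0 + (pi *+ 2) *+ m :> R by rewrite add0r mulr_natr mulr_natl.
rewrite /ee h (periodicn (@cosD2pi R)) (periodicn (@sinD2pi R)) cos0 sin0 //.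
Qed.

Lemma ee_int (m : int) : ee m%:~R = 1.
Proof.
case: m => m; first exact: ee_nat.
have : ee (- (m.+1%:R)) * ee (m.+1%:R) = 1 by rewrite -eeD addNr ee0.
by rewrite ee_nat mulr1 NegzE mulrNz.
Qed.
Lemma cos_eq1 (y : R) : 0 <= y < pi *+ 2 -> cos y = 1 -> y = 0.
Proof.
move=> /andP[y0 y2] cy.
have pi0 := @pi_gt0 R.
have [ylepi|piy] := leP y pi.
  apply: cos_inj; rewrite ?in_itv /= ?y0 ?ylepi ?lexx ?ltW //.
  by rewrite cy cos0.
have z0 : 0 < pi *+ 2 - y by rewrite subr_gt0.
have zpi : pi *+ 2 - y < pi by rewrite mulr2n -addrA gtrDl subr_lt0.
have : cos (pi *+ 2 - y) = cos 0.
  by rewrite addrC (@cosD2pi R) cosN cy cos0.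
move/cos_inj; rewrite !in_itv /= lexx (ltW z0) (ltW zpi) (ltW pi0) => /(_ isT isT) h.
by move: z0; rewrite h ltxx.
Qed.

Lemma ee_eq1 x : ee x = 1 -> x \is a Num.int.
Proof.
move=> ex.
set m := Num.floor x.
have hr : ee (x - m%:~R) = 1 by rewrite eeD -mulrNz ee_int ex mulr1.
have /andP[h1 h2] : 0 <= x - m%:~R < 1.
  move: (Num.Theory.floor_itv x); rewrite -/m => /andP[a b]; rewrite subr_ge0 a /= ltrBlDl.
  by rewrite intrD addrC in b; rewrite addrC.
have : 2 * pi * (x - m%:~R) = 0.
  apply: cos_eq1; last by move: hr; rewrite /ee => -[].
  rewrite mulr_ge0 ?mulr_ge0 ?pi_ge0 //=.
  by rewrite -(mulr_natl pi 2) -[X in _ < X]mulr1 ltr_pM2l // mulr_gt0 ?pi_gt0.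
move/eqP; rewrite !mulf_eq0 pnatr_eq0 /= (negbTE (lt0r_neq0 (@pi_gt0 R))) /= subr_eq0 => /eqP ->.
by rewrite intr_int.
Qed.
End T.

Set Implicit Arguments. Unset Strict Implicit.
Section F.
Variable F : fieldType.

Lemma stab_rep k n (W : 'M[F]_(k,n)) (M : 'M[F]_n) :
  row_free W -> (W *m M <= W)%MS -> M \in unitmx ->
  exists2 a, a \in unitmx & W *m M = a *m W.
Proof.
move=> fW /submxP [a ha] uM; exists a => //.
rewrite -row_free_unit /row_free eqn_leq rank_leq_row /=.
have hk : \rank (W *m M) = k by rewrite mxrankMfree ?row_free_unit // (eqP fW).
by rewrite -[X in (X <= _)%N]hk ha mxrankM_maxl.
Qed.

Lemma stab_inv k n (W : 'M[F]_(k,n)) (M : 'M[F]_n) a :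
  M \in unitmx -> a \in unitmx -> W *m M = a *m W -> W *m invmx M = invmx a *m W.
Proof.
move=> uM ua h.
by rewrite -[invmx a *m W](mulmxK uM) -(mulmxA (invmx a) W M) h mulmxA mulVmx // mul1mx.
Qed.

Lemma stab_comm k n (W : 'M[F]_(k,n)) (M1 M2 : 'M[F]_n) a1 a2 :
  M1 \in unitmx -> M2 \in unitmx -> a1 \in unitmx -> a2 \in unitmx ->
  W *m M1 = a1 *m W -> W *m M2 = a2 *m W ->
  W *m (M1 *m M2 *m invmx M1 *m invmx M2) = (a1 *m a2 *m invmx a1 *m invmx a2) *m W.
Proof.
move=> u1 u2 v1 v2 h1 h2.
have i1 := stab_inv u1 v1 h1; have i2 := stab_inv u2 v2 h2.
rewrite !mulmxA h1 -(mulmxA a1 W M2) h2 mulmxA.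
rewrite -(mulmxA (a1 *m a2) W) i1 mulmxA.
by rewrite -(mulmxA (a1 *m a2 *m invmx a1) W) i2 mulmxA.
Qed.

Lemma det_comm k (a1 a2 : 'M[F]_k) : a1 \in unitmx -> a2 \in unitmx ->
  \det (a1 *m a2 *m invmx a1 *m invmx a2) = 1.
Proof.
move=> v1 v2; rewrite !det_mulmx !det_inv.
by rewrite mulrAC mulrK -?unitmxE // divrr -?unitmxE.
Qed.

Lemma unit_of_inv n (M N : 'M[F]_n) : M *m N = 1%:M -> M \in unitmx.
Proof.
move=> h; rewrite unitmxE; apply/unitrPr; exists (\det N).
by rewrite -det_mulmx h det1.
Qed.
End F.

Set Implicit Arguments. Unset Strict Implicit.

Section Comb.
Variables (n : nat) (S : {set 'I_n}).

Definition cls (i j : 'I_n) := (j \in S) == (i \in S).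

Definition nxt (i : 'I_n) : 'I_n :=
  if [pick j | cls i j && (val i < val j)%N] is Some j0
  then arg_min j0 (fun j => cls i j && (val i < val j)%N) (fun j => val j)
  else arg_min i (fun j => cls i j) (fun j => val j).

Lemma cls_refl i : cls i i. Proof. by rewrite /cls. Qed.
Lemma cls_sym i j : cls i j = cls j i. Proof. by rewrite /cls eq_sym. Qed.
Lemma cls_trans i j l : cls i j -> cls j l -> cls i l.
Proof. by rewrite /cls => /eqP a /eqP b; rewrite b a. Qed.
Lemma clsE i j : cls i j -> cls j =1 cls i.
Proof. by rewrite /cls => /eqP a l; rewrite a. Qed.

Variant nxt_spec (i : 'I_n) : 'I_n -> Prop :=
| NxtA j of cls i j & (val i < val j)%N &
    (forall l, cls i l -> (val i < val l)%N -> (val j <= val l)%N) : nxt_spec i j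
| NxtB j of cls i j & (forall l, cls i l -> (val l <= val i)%N) &
    (forall l, cls i l -> (val j <= val l)%N) : nxt_spec i j.

Lemma nxtP i : nxt_spec i (nxt i).
Proof.
rewrite /nxt; case: pickP => [j0 Hj0 | Hn].
  case: arg_minnP => // j /andP[cj ij] hmin.
  by apply: NxtA => // l cl il; apply: hmin; rewrite cl il.
case: arg_minnP => [|j cj hmin]; first exact: cls_refl.
apply: NxtB => // l cl; have := Hn l; rewrite cl /= => /negbT.
by rewrite -leqNgt.
Qed.

Lemma nxt_cls i : cls i (nxt i).
Proof. by case: nxtP. Qed.

Lemma nxt_inj : injective nxt.
Proof.
move=> i1 i2 e.
have c1 := nxt_cls i1; have c2 := nxt_cls i2.
have c12 : cls i1 i2 by apply: cls_trans c1 _; rewrite e cls_sym.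
have c21 : cls i2 i1 by rewrite cls_sym.
apply: val_inj; apply/eqP; rewrite eqn_leq.
move: e; case: nxtP => j a1 a2 a3; case: nxtP => j' b1 b2 b3 e; subst j'.
- apply/andP; split; rewrite leqNgt; apply/negP => h.
    by have := b3 _ c21 h; rewrite leqNgt a2.
  by have := a3 _ c12 h; rewrite leqNgt b2.
- by have := b3 _ c21; rewrite leqNgt a2.
- by have := a3 _ c12; rewrite leqNgt b2.
- by rewrite b2 // a2.
Qed.

Definition sig_n : {perm 'I_n} := perm nxt_inj.

Lemma sig_nE i : sig_n i = nxt i. Proof. by rewrite permE. Qed.

Lemma sig_S i : (sig_n i \in S) = (i \in S).
Proof. by rewrite sig_nE; apply/eqP; exact: nxt_cls. Qed.

Variable F : fieldType.
Variable t : 'I_n -> F.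
Hypothesis hS : \prod_(j in S) t j = 1.
Hypothesis hSc : \prod_(j in ~: S) t j = 1.

Definition dd (j : 'I_n) : F := \prod_(l | cls j l && (val l < val j)%N) t l.

Lemma prod_cls i : \prod_(l | cls i l) t l = 1.
Proof.
rewrite /cls; case: (boolP (i \in S)) => hi.
  by apply: (etrans _ hS); apply: eq_bigl => l; rewrite eqb_id.
by apply: (etrans _ hSc); apply: eq_bigl => l; rewrite eqbF_neg finset.in_setC.
Qed.

Lemma dd_nxt i : dd (nxt i) = t i * dd i.
Proof.
rewrite /dd; case: nxtP => j cj ij hmin.
  rewrite (bigD1 i) /=; last by rewrite cls_sym cj.
  congr (_ * _); apply: eq_bigl => l; rewrite (clsE cj).
  case: (boolP (cls i l)) => //= cl.
  case: (ltngtP (val l) (val i)) => [li|il|/val_inj ->].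
  - by rewrite (ltn_trans li ij) /=; apply/eqP => h; move: li; rewrite h ltnn.
  - by rewrite ltnNge (hmin _ cl il).
  - by rewrite eqxx andbF.
rewrite big_pred0; last first.
  by move=> l; rewrite (clsE cj); case: (boolP (cls i l)) => //= cl; rewrite ltnNge hmin.
rewrite -[LHS](prod_cls i) (bigD1 i) ?cls_refl //=; congr (_ * _); apply: eq_bigl => l.
case: (boolP (cls i l)) => //= cl.
by rewrite ltn_neqAle ij // andbT val_eqE.
Qed.
End Comb.

Local Open Scope complex_scope.
Set Implicit Arguments. Unset Strict Implicit.

Section Mx.
Variable R : realType.
Local Notation C := (complex R).

Lemma conj_nat (k : nat) : Num.conj (k%:R : C) = k%:R.
Proof. by rewrite conjE conjc_nat. Qed.

Lemma adjmx_perm n (s : {perm 'I_n}) : adjmx (perm_mx s : 'M[C]_n) = perm_mx s^-1.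
Proof.
apply/matrixP => i j; rewrite !mxE conj_nat.
suff -> : (s j == i) = (s^-1%g i == j) by [].
by apply/idP/idP => /eqP <-; rewrite ?permK ?permKV eqxx.
Qed.
Lemma unitary_perm n (s : {perm 'I_n}) : unitary (perm_mx s : 'M[C]_n).
Proof. by rewrite /unitary adjmx_perm -perm_mxM mulgV perm_mx1. Qed.

Lemma unitary1 n : unitary (1%:M : 'M[C]_n).
Proof. by rewrite -perm_mx1; apply: unitary_perm. Qed.

Lemma adjmx1 n : adjmx (1%:M : 'M[C]_n) = 1%:M.
Proof. by rewrite -perm_mx1 adjmx_perm invg1. Qed.

Section Diag.
Variables (n : nat) (d : 'I_n -> C).
Hypothesis hd : forall j, d j * conjc (d j) = 1.

Definition Dm : 'M[C]_n := diag_mx (\row_j d j).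

Lemma d_neq0 j : d j != 0.
Proof. by apply/eqP => h; have := hd j; rewrite h mul0r => /eqP; rewrite eq_sym oner_eq0. Qed.

Lemma adjmx_Dm : adjmx Dm = diag_mx (\row_j conjc (d j)).
Proof.
apply/matrixP => i j; rewrite !mxE conjE eq_sym.
by case: eqP => [->|]; rewrite ?mulr1n ?mulr0n ?conjc0.
Qed.

Lemma unitary_Dm : unitary Dm.
Proof.
rewrite /unitary adjmx_Dm /Dm mulmx_diag; apply/matrixP => i j; rewrite !mxE hd.
by [].
Qed.

Lemma invmx_Dm : invmx Dm = diag_mx (\row_j (d j)^-1).
Proof.
have h : Dm *m diag_mx (\row_j (d j)^-1) = 1%:M.
  rewrite /Dm mulmx_diag; apply/matrixP => i j; rewrite !mxE divff ?d_neq0 //.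
have u : Dm \in unitmx by apply: (unit_of_inv h).
by rewrite -[invmx Dm]mulmx1 -h mulmxA mulVmx // mul1mx.
Qed.

Variables (s : {perm 'I_n}) (t : 'I_n -> C).
Hypothesis hds : forall i, d (s i) = t i * d i.

Lemma commP : commmx (perm_mx s) Dm = diag_mx (\row_i t i).
Proof.
have h : perm_mx s *m Dm = diag_mx (\row_i d (s i)) *m perm_mx s.
  apply/matrixP => i j; rewrite mul_mx_diag mul_diag_mx !mxE.
  by case: eqP => [<-|]; rewrite ?mulr1 ?mul1r ?mulr0 ?mul0r.
rewrite /commmx h -(mulmxA _ (perm_mx s)) mulmxV ?unitmx_perm // mulmx1 invmx_Dm mulmx_diag.
by apply/matrixP => i j; rewrite !mxE hds mulfK ?d_neq0.
Qed.
End Diag.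
End Mx.

Local Open Scope complex_scope.
Set Implicit Arguments. Unset Strict Implicit.

Lemma forward (R : realType) g n (gam : 'I_n -> R) (A B : 'I_g -> 'M[complex R]_n) U :
  is_rep A B -> reducible_rep A B -> unitary U -> U *m diag_exp gam *m adjmx U = Psi_tilde A B ->
  exists S : {set 'I_n}, (0 < #|S| < n)%N /\ (\sum_(j in S) gam j) \is a Num.int.
Proof.
move=> hrep [V [hV0 [hVn hst]]] hU hpsi.
pose W := row_base V.
have fW : row_free W := row_base_free V.
have key : forall M, unitary M -> stablemx V M -> exists2 a, a \in unitmx & W *m M = a *m W.
  move=> M uM sM; apply: stab_rep => //; last exact: unit_of_inv uM.
  by rewrite /W stablemx_row_base.
have [psi [hpsiW dpsi]] : exists psi : 'M[complex R]_(\rank V), W *m Psi_tilde A B = psi *m W /\ \det psi = 1.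
  rewrite /Psi_tilde; apply: (big_ind (fun X => exists psi, W *m X = psi *m W /\ \det psi = 1)).
  - by exists 1%:M; split; [rewrite mulmx1 mul1mx | exact: det1].
  - move=> X Y [p [hp dp]] [q [hq dq]]; exists (p *m q).
    by rewrite mulmxA hp -mulmxA hq mulmxA det_mulmx dp dq mulr1.
  - move=> i _; have [uA uB] := hrep i; have [sA sB] := hst i.
    have [a ua ha] := key _ uA sA; have [b ub hb] := key _ uB sB.
    exists (a *m b *m invmx a *m invmx b); split; last exact: det_comm.
    exact: stab_comm (unit_of_inv uA) (unit_of_inv uB) ua ub ha hb.
have hUU : adjmx U *m U = 1%:M := mulmx1C hU.
pose X := W *m U.
pose D := diag_exp gam.
have hXD : X *m D = psi *m X.
  have h : W *m U *m D *m (adjmx U *m U) = W *m (U *m D *m adjmx U) *m U by rewrite !mulmxA.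
  rewrite hUU mulmx1 hpsi hpsiW in h. by rewrite /X h -mulmxA.
have fX : row_free X.
  by rewrite /row_free /X mxrankMfree ?row_free_unit ?(unit_of_inv hU).
have hfull : row_full X^T by rewrite /row_full mxrank_tr.
pose f := fullrankfun hfull.
pose Y := rowsub f X^T.
have uY : Y \in unitmx := fullrowsub_unit hfull.
have h1 : rowsub f (D *m X^T) = diag_mx (\row_i ee (gam (f i))) *m Y.
  by apply/matrixP=> i j; rewrite /D /diag_exp !mul_diag_mx !mxE.
have h2 : D *m X^T = X^T *m psi^T by rewrite -[D]tr_diag_mx -trmx_mul hXD trmx_mul.
have h3 : \prod_i ee (gam (f i)) = 1.
  have := congr1 determinant h1.
  rewrite h2 -mul_rowsub_mx !det_mulmx det_tr dpsi det_diag mulr1.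
  under eq_bigr do rewrite mxE.
  by move/(congr1 (fun z => z / \det Y)); rewrite mulrK ?divrr -?unitmxE.
rewrite -(big_morph _ (@eeD R) (@ee0 R)) in h3.
have hs := ee_eq1 h3.
exists (f @: [set: 'I_(\rank V)]).
have finj : injective f by apply: fullrankfun_inj.
rewrite card_imset // cardsT card_ord hV0 hVn; split => //.
rewrite big_imset /=; last by move=> x y _ _; apply: finj.
by rewrite (eq_bigl xpredT) // => i; rewrite finset.in_setT.
Qed.

Local Open Scope complex_scope.
Set Implicit Arguments. Unset Strict Implicit.

Lemma stab_diag (R : realType) n (S : {set 'I_n}) (M : 'M[complex R]_n) :
  (forall i j, i \in S -> j \notin S -> M i j = 0) ->
  stablemx (diag_mx (\row_(j < n) (((j \in S) : bool)%:R : complex R))) M.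
Proof.
move=> h.
set W := (X in (_ <= X)%MS).
have -> : W *m M = W *m M *m W.
  apply/matrixP => i j; rewrite mul_mx_diag mul_diag_mx !mxE.
  case: (boolP (i \in S)) => hi; case: (boolP (j \in S)) => hj;
    rewrite ?mul0r ?mulr1 ?mul1r ?mulr0 //.
  by rewrite (h i j hi hj).
exact: submxMl.
Qed.

Lemma backward (R : realType) (g n : nat) (gam : 'I_n -> R) :
  (1 <= g)%N -> \det (diag_exp gam) = 1 ->
  (exists S : {set 'I_n}, (0 < #|S| < n)%N /\ (\sum_(j in S) gam j) \is a Num.int) ->
  (exists (A B : 'I_g -> 'M[complex R]_n) (U : 'M[complex R]_n),
      is_rep A B /\ reducible_rep A B /\ unitary U /\
      U *m diag_exp gam *m adjmx U = Psi_tilde A B).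
Proof.
case: g => [//|g] _ hdet [S [/andP[hS0 hSn] hint]].
pose t j := ee (gam j).
have hSp : \prod_(j in S) t j = 1.
  case/intrP: hint => m hm.
  by rewrite /t -(big_morph _ (@eeD R) (@ee0 R)) hm ee_int.
have hall : \prod_j t j = 1.
  rewrite /diag_exp det_diag in hdet.
  by rewrite (eq_bigr (fun i => t i)) in hdet => // i _; rewrite mxE.
have hSc : \prod_(j in ~: S) t j = 1.
  rewrite (bigID (fun j => j \in S)) /= hSp mul1r in hall.
  by apply: (etrans _ hall); apply: eq_bigl => j; rewrite finset.in_setC.
pose s := sig_n S. pose d := dd S t.
have hd : forall j, d j * conjc (d j) = 1.
  move=> j; rewrite /d /dd rmorph_prod -big_split /= big1 // => l _; exact: ee_conj.
have hds : forall i, d (s i) = t i * d i.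
  by move=> i; rewrite /s sig_nE; exact: dd_nxt hSp hSc i.
pose P := perm_mx s : 'M[complex R]_n. pose D := Dm d.
exists (fun i : 'I_g.+1 => if val i == 0%N then P else 1%:M), (fun i => D), 1%:M.
split.
  move=> i; split; last exact: unitary_Dm.
  by case: ifP => _; [exact: unitary_perm | exact: unitary1].
split.
  exists (diag_mx (\row_(j < n) (((j \in S) : bool)%:R : complex R))); split; [|split].
  - rewrite lt0n mxrank_eq0; case/card_gt0P: hS0 => j hj.
    apply/eqP => h; have := congr1 (fun M : 'M[complex R]_n => M j j) h; rewrite !mxE hj eqxx /=.
    by move/eqP; rewrite oner_eq0.
  - rewrite ltn_neqAle rank_leq_row andbT.
    change (~~ row_free (diag_mx (\row_(j < n) (((j \in S) : bool)%:R : complex R)))).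
    rewrite row_free_unit unitmxE det_diag.
    have : (0 < #|~: S|)%N by have hc := cardsC S; rewrite card_ord in hc; rewrite -(ltn_add2l #|S|) addn0 hc.
    case/card_gt0P => j; rewrite finset.in_setC => hj.
    by rewrite (bigD1 j) //= mxE (negbTE hj) mul0r unitr0.
  - move=> i; split.
      case: ifP => _; apply: stab_diag => a b ha hb; rewrite !mxE.
        by case: eqP => // e; move: hb; rewrite -e /s sig_S ha.
      by case: eqP => // e; move: hb; rewrite -e ha.
    apply: stab_diag => a b ha hb; rewrite !mxE.
    by case: eqP => // e; move: hb; rewrite -e ha.
split; first exact: unitary1.
rewrite adjmx1 mulmx1 mul1mx /Psi_tilde big_ord_recl /=.
have -> : \big[mulmx/1%:M]_(i < g) commmx (if val (lift ord0 i) == 0%N then P else 1%:M) D = 1%:M.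
  apply: (big_ind (fun x => x = 1%:M)) => //.
    by move=> x y -> ->; rewrite mulmx1.
  move=> i _ /=; rewrite /commmx invmx1 mul1mx mulmx1 mulmxV //.
  exact: (unit_of_inv (unitary_Dm hd)).
by rewrite mulmx1 (commP hd hds).
Qed.

Close Scope complex_scope.
Unset Implicit Arguments. Set Strict Implicit.

Theorem mainTheorem4 (R : realType) (g n : nat) (gam : 'I_n -> R) :
  (1 <= g)%N ->
  (forall j, 0 <= gam j < 1) ->
  \det (diag_exp gam) = 1 ->
  (exists (A B : 'I_g -> 'M[complex R]_n) (U : 'M[complex R]_n),
      is_rep A B /\ reducible_rep A B /\ unitary U /\
      U *m diag_exp gam *m adjmx U = Psi_tilde A B)
  <->
  (exists S : {set 'I_n}, (0 < #|S| < n)%N /\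
      (\sum_(j in S) gam j) \is a Num.int).
Proof.
move=> hg _ hdet; split.
  by case=> A [B [U [h1 [h2 [h3 h4]]]]]; exact: forward h1 h2 h3 h4.
exact: backward hg hdet.
Qed.
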